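(* Let $(M,\pi)$ be a partial $H$-module and write $h\cdot m=\pi(h)(m)$. (a) The global core of $M$ is $$c(M)=\{m\in M : g\cdot(h\cdot m)=(gh)\cdot m \text{ for all } g,h\in H\},$$ and $c$ defines a functor ${}_H\mathcal M^{par}\to{}_H\mathcal M$ that is right adjoint to the inclusion functor $i:{}_H\mathcal M\to{}_H\mathcal M^{par}$. (b) The global shadow of $M$ is $s(M)=M/N$, where $N$ is the partial $H$-submodule of $M$ generated by all elements $h\cdot(g\cdot m)-(hg)\cdot m$ with $h,g\in H$, $m\in M$. Moreover $s$ defines a functor ${}_H\mathcal M^{par}\to{}_H\mathcal M$ that is left adjoint to $i$.
   Context: Throughout, $k$ is a field and $H$ is a Hopf algebra over $k$ with bijective antipode $S$ and Sweedler notation $\Delta(h)=h_{(1)}\otimes h_{(2)}$. A partial $H$-module is a vector space $M$ with a linear map $\pi:H\to\mathrm{End}_k(M)$ satisfying, for all $h,k\in H$: - $\pi(1_H)=\mathrm{id}$; - $\pi(h)\pi(k_{(1)})\pi(S(k_{(2)}))=\pi(hk_{(1)})\pi(S(k_{(2)}))$; - $\pi(h_{(1)})\pi(S(h_{(2)}))\pi(k)=\pi(h_{(1)})\pi(S(h_{(2)})k)$; - $\pi(h)\pi(S(k_{(1)}))\pi(k_{(2)})=\pi(hS(k_{(1)}))\pi(k_{(2)})$; - $\pi(S(h_{(1)}))\pi(h_{(2)})\pi(k)=\pi(S(h_{(1)}))\pi(h_{(2)}k)$. Morphisms of partial $H$-modules are linear maps commuting with the $\pi(h)$; they form the category ${}_H\mathcal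 M^{par}$. A partial submodule is a subspace stable under all $\pi(h)$. Every left $H$-module $M$ (action $\triangleright$) is a partial $H$-module via $\pi(h)(m)=h\triangleright m$. This gives the inclusion functor $i:{}_H\mathcal M\to{}_H\mathcal M^{par}$. A partial $H$-module is called global if $\pi$ is an algebra morphism, i.e. it lies in the image of $i$. The global core of $M$ is the largest partial submodule of $M$ that is global. The global shadow is the largest quotient of $M$ (by a partial submodule) that is global. *)

(* Defs.v *)
From HB Require Import structures.
From mathcomp Require Import all_boot all_order all_algebra.
Set Implicit Arguments. Unset Strict Implicit. Unset Printing Implicit Defensive.
Import GRing.Theory.
Local Open Scope ring_scope.

Section Hopf.
Variable k : fieldType.

Definition klinear (U V : lmodType k) (f : U -> V) : Prop :=
  forall (a : k) (x y : U), f (a *: x + y) = a *: f x + f y.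

Variable H : algType k.

(** Elements of H (x) H are represented (Sweedler style) by finite lists of
    simple tensors [sum_i a_i (x) b_i].  Two such lists represent the same
    tensor iff every bilinear map agrees on them; all axioms involving
    tensors are therefore stated by testing against multilinear maps. *)
Definition bilin (V : lmodType k) (f : H -> H -> V) : Prop :=
  (forall a, klinear (f a : H -> V)) /\ (forall b, klinear (fun a : H => f a b)).

Definition trilin (V : lmodType k) (f : H -> H -> H -> V) : Prop :=
  (forall a b, klinear (f a b : H -> V)) /\
  (forall a c, klinear (fun b : H => f a b c)) /\
  (forall b c, klinear (fun a : H => f a b c)).

Definition teval (V : lmodType k) (t : seq (H * H)) (f : H -> H -> V) : V :=
  \sum_(p <- t) f p.1 p.2.

Record hopf := Hopf {
  Delta : H -> seq (H * H);
  eps : H -> k;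
  antip : H -> H;
  Delta_lin : forall (V : lmodType k) (f : H -> H -> V), bilin f ->
    forall a x y, teval (Delta (a *: x + y)) f
                  = a *: teval (Delta x) f + teval (Delta y) f;
  Delta_mul : forall (V : lmodType k) (f : H -> H -> V), bilin f ->
    forall g h, teval (Delta (g * h)) f
      = \sum_(p <- Delta g) \sum_(q <- Delta h) f (p.1 * q.1) (p.2 * q.2);
  Delta_one : forall (V : lmodType k) (f : H -> H -> V), bilin f ->
    teval (Delta 1) f = f 1 1;
  coassoc : forall (V : lmodType k) (f : H -> H -> H -> V), trilin f ->
    forall h, \sum_(p <- Delta h) \sum_(q <- Delta p.1) f q.1 q.2 p.2
            = \sum_(p <- Delta h) \sum_(q <- Delta p.2) f p.1 q.1 q.2;
  eps_lin : forall a x y, eps (a *: x + y) = a * eps x + eps y;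
  eps_mul : forall g h, eps (g * h) = eps g * eps h;
  eps_one : eps 1 = 1;
  counit_l : forall h, \sum_(p <- Delta h) eps p.1 *: p.2 = h;
  counit_r : forall h, \sum_(p <- Delta h) eps p.2 *: p.1 = h;
  antip_lin : forall a x y, antip (a *: x + y) = a *: antip x + antip y;
  antip_l : forall h, \sum_(p <- Delta h) antip p.1 * p.2 = eps h *: 1;
  antip_r : forall h, \sum_(p <- Delta h) p.1 * antip p.2 = eps h *: 1;
  antip_bij : bijective antip
}.

Variable HH : hopf.
Local Notation D := (Delta HH).
Local Notation S := (antip HH).

Record pmod := PMod {
  pcar :> lmodType k;
  pact : H -> pcar -> pcar;
  pact_linr : forall h, klinear (pact h);
  pact_linl : forall a g h m, pact (a *: g + h) m = a *: pact g m + pact h m;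
  pact_one : forall m, pact 1 m = m;
  pax1 : forall h g m,
    \sum_(p <- D g) pact h (pact p.1 (pact (S p.2) m))
    = \sum_(p <- D g) pact (h * p.1) (pact (S p.2) m);
  pax2 : forall h g m,
    \sum_(p <- D h) pact p.1 (pact (S p.2) (pact g m))
    = \sum_(p <- D h) pact p.1 (pact (S p.2 * g) m);
  pax3 : forall h g m,
    \sum_(p <- D g) pact h (pact (S p.1) (pact p.2 m))
    = \sum_(p <- D g) pact (h * S p.1) (pact p.2 m);
  pax4 : forall h g m,
    \sum_(p <- D h) pact (S p.1) (pact p.2 (pact g m))
    = \sum_(p <- D h) pact (S p.1) (pact (p.2 * g) m)
}.

Record hmod := HMod {
  hcar :> lmodType k;
  hact : H -> hcar -> hcar;
  hact_linr : forall h, klinear (hact h);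
  hact_linl : forall a g h m, hact (a *: g + h) m = a *: hact g m + hact h m;
  hact_one : forall m, hact 1 m = m;
  hact_mul : forall g h m, hact g (hact h m) = hact (g * h) m
}.

Definition pmorph (M N : pmod) (f : M -> N) : Prop :=
  klinear f /\ forall h m, f (pact h m) = pact h (f m).
Definition hmorph (X Y : hmod) (f : X -> Y) : Prop :=
  klinear f /\ forall h m, f (hact h m) = hact h (f m).

(** The inclusion functor i : H-Mod -> H-Mod^par (on objects; on morphisms it
    is the identity on underlying maps). *)
Lemma incl_pax1 (X : hmod) h g (m : X) :
  \sum_(p <- D g) hact h (hact p.1 (hact (S p.2) m))
  = \sum_(p <- D g) hact (h * p.1) (hact (S p.2) m).
Proof. apply: eq_bigr => p _. by rewrite (hact_mul h p.1). Qed.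
Lemma incl_pax2 (X : hmod) h g (m : X) :
  \sum_(p <- D h) hact p.1 (hact (S p.2) (hact g m))
  = \sum_(p <- D h) hact p.1 (hact (S p.2 * g) m).
Proof. apply: eq_bigr => p _. by rewrite (hact_mul (S p.2) g). Qed.
Lemma incl_pax3 (X : hmod) h g (m : X) :
  \sum_(p <- D g) hact h (hact (S p.1) (hact p.2 m))
  = \sum_(p <- D g) hact (h * S p.1) (hact p.2 m).
Proof. apply: eq_bigr => p _. by rewrite (hact_mul h (S p.1)). Qed.
Lemma incl_pax4 (X : hmod) h g (m : X) :
  \sum_(p <- D h) hact (S p.1) (hact p.2 (hact g m))
  = \sum_(p <- D h) hact (S p.1) (hact (p.2 * g) m).
Proof. apply: eq_bigr => p _. by rewrite (hact_mul p.2 g). Qed.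

Definition incl (X : hmod) : pmod :=
  @PMod (hcar X) (@hact X) (@hact_linr X) (@hact_linl X) (@hact_one X)
    (@incl_pax1 X) (@incl_pax2 X) (@incl_pax3 X) (@incl_pax4 X).

(** A partial module is global if pi is an algebra morphism (pi is already
    linear and unital, so this is multiplicativity). *)
Definition pglobal (M : pmod) : Prop :=
  forall g h (m : M), pact g (pact h m) = pact (g * h) m.

Definition psubmod (M : pmod) (P : M -> Prop) : Prop :=
  P 0 /\ (forall a x y, P x -> P y -> P (a *: x + y)) /\
  (forall h m, P m -> P (pact h m)).

Definition psub_global (M : pmod) (P : M -> Prop) : Prop :=
  forall g h m, P m -> pact g (pact h m) = pact (g * h) m.

Definition is_global_core (M : pmod) (P : M -> Prop) : Prop :=
  psubmod P /\ psub_global P /\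
  (forall Q, psubmod Q -> psub_global Q -> forall m, Q m -> P m).

(** q : M -> Q realizes the quotient of M by P: a surjective morphism of
    partial modules with kernel P (so Q is M/P up to isomorphism). *)
Definition quotient_map (M Q : pmod) (q : M -> Q) (P : M -> Prop) : Prop :=
  pmorph q /\ (forall y : Q, exists m, q m = y) /\ (forall m, q m = 0 <-> P m).

Definition quot_global (M : pmod) (P : M -> Prop) : Prop :=
  exists (Q : pmod) (q : M -> Q), quotient_map q P /\ pglobal Q.

(** M/P is the global shadow: the largest global quotient of M by a partial
    submodule, i.e. P is the smallest partial submodule with M/P global. *)
Definition is_global_shadow (M : pmod) (P : M -> Prop) : Prop :=
  psubmod P /\ quot_global P /\
  (forall P', psubmod P' -> quot_global P' -> forall m, P m -> P' m).

Definition core_set (M : pmod) (m : M) : Prop :=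
  forall g h, pact g (pact h m) = pact (g * h) m.

Definition shadow_gen (M : pmod) (x : M) : Prop :=
  exists h g m, x = pact h (pact g m) - pact (h * g) m.
Definition gen_psubmod (M : pmod) (G : M -> Prop) (x : M) : Prop :=
  forall P, psubmod P -> (forall y, G y -> P y) -> P x.

Definition is_functor_PH (F : pmod -> hmod)
    (FF : forall M N : pmod, (M -> N) -> F M -> F N) : Prop :=
  (forall (M N : pmod) (f : M -> N), pmorph f -> hmorph (FF M N f)) /\
  (forall (M : pmod) (x : F M), FF M M id x = x) /\
  (forall (M N L : pmod) (f : M -> N) (g : N -> L), pmorph f -> pmorph g ->
     forall x, FF M L (g \o f) x = FF N L g (FF M N f x)).

(** Hom-set adjunction  i -| G :  Hom_par(i X, M) ~ Hom_H(X, G M),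
    natural in X and M. *)
Definition right_adjoint_of_incl (G : pmod -> hmod)
    (GF : forall M N : pmod, (M -> N) -> G M -> G N) : Prop :=
  exists (Phi : forall (X : hmod) (M : pmod), (X -> M) -> X -> G M)
         (Psi : forall (X : hmod) (M : pmod), (X -> G M) -> X -> M),
  (forall (X : hmod) (M : pmod) (f : X -> M), @pmorph (incl X) M f -> hmorph (Phi X M f)) /\
  (forall (X : hmod) (M : pmod) (g : X -> G M), hmorph g -> @pmorph (incl X) M (Psi X M g)) /\
  (forall (X : hmod) (M : pmod) (f : X -> M), @pmorph (incl X) M f ->
     forall x, Psi X M (Phi X M f) x = f x) /\
  (forall (X : hmod) (M : pmod) (g : X -> G M), hmorph g ->
     forall x, Phi X M (Psi X M g) x = g x) /\
  (forall (X X' : hmod) (M : pmod) (u : X' -> X) (f : X -> M), hmorph u -> @pmorph (incl X) M f ->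
     forall x, Phi X' M (f \o u) x = Phi X M f (u x)) /\
  (forall (X : hmod) (M N : pmod) (f : X -> M) (v : M -> N), @pmorph (incl X) M f -> pmorph v ->
     forall x, Phi X N (v \o f) x = GF M N v (Phi X M f x)).

(** Hom-set adjunction  F -| i :  Hom_H(F M, X) ~ Hom_par(M, i X),
    natural in M and X. *)
Definition left_adjoint_of_incl (F : pmod -> hmod)
    (FF : forall M N : pmod, (M -> N) -> F M -> F N) : Prop :=
  exists (Phi : forall (M : pmod) (X : hmod), (F M -> X) -> M -> X)
         (Psi : forall (M : pmod) (X : hmod), (M -> X) -> F M -> X),
  (forall (M : pmod) (X : hmod) (g : F M -> X), hmorph g -> @pmorph M (incl X) (Phi M X g)) /\
  (forall (M : pmod) (X : hmod) (f : M -> X), @pmorph M (incl X) f -> hmorph (Psi M X f)) /\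
  (forall (M : pmod) (X : hmod) (g : F M -> X), hmorph g ->
     forall y, Psi M X (Phi M X g) y = g y) /\
  (forall (M : pmod) (X : hmod) (f : M -> X), @pmorph M (incl X) f ->
     forall m, Phi M X (Psi M X f) m = f m) /\
  (forall (M N : pmod) (X : hmod) (u : M -> N) (g : F N -> X), pmorph u -> hmorph g ->
     forall m, Phi M X (g \o FF M N u) m = Phi N X g (u m)) /\
  (forall (M : pmod) (X Y : hmod) (g : F M -> X) (v : X -> Y), hmorph g -> hmorph v ->
     forall m, Phi M Y (v \o g) m = v (Phi M X g m)).

End Hopf.

(* Main.v *)
Require Import Defs.
From HB Require Import structures.
From mathcomp Require Import all_boot all_order all_algebra.
From mathcomp Require Import boolp.
Set Implicit Arguments. Unset Strict Implicit. Unset Printing Implicit Defensive.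
Import GRing.Theory.
Local Open Scope ring_scope.
Local Open Scope quotient_scope.

Lemma klin0 (k : fieldType) (U V : lmodType k) (f : U -> V) : klinear f -> f 0 = 0.
Proof. move=> Hf; have := Hf 1 0 0; rewrite scale1r addr0 scale1r => E.
by apply: (addrI (f 0)); rewrite addr0 -E. Qed.
Lemma klinD (k : fieldType) (U V : lmodType k) (f : U -> V) : klinear f -> forall x y, f (x + y) = f x + f y.
Proof. by move=> Hf x y; have := Hf 1 x y; rewrite !scale1r. Qed.
Lemma klinZ (k : fieldType) (U V : lmodType k) (f : U -> V) : klinear f -> forall a x, f (a *: x) = a *: f x.
Proof. by move=> Hf a x; have := Hf a x 0; rewrite (klin0 Hf) !addr0. Qed.
Lemma klinN (k : fieldType) (U V : lmodType k) (f : U -> V) : klinear f -> forall x, f (- x) = - f x.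
Proof. by move=> Hf x; rewrite -scaleN1r klinZ // scaleN1r. Qed.
Lemma klinB (k : fieldType) (U V : lmodType k) (f : U -> V) : klinear f -> forall x y, f (x - y) = f x - f y.
Proof. by move=> Hf x y; rewrite klinD // klinN. Qed.

Section Core.
Variables (k : fieldType) (H : algType k) (HH : hopf H) (M : pmod HH).

Definition core_pred : {pred M} := fun m => `[< core_set m >].

Lemma core_closed : subsemimod_closed core_pred.
Proof.
split; [split|].
- apply/asboolP => g h. by rewrite !klin0 //; apply: pact_linr.
- move=> x y /asboolP Hx /asboolP Hy; apply/asboolP => g h.
  by rewrite !klinD //; [rewrite Hx Hy | apply: pact_linr..].
- move=> a x /asboolP Hx; apply/asboolP => g h.
  by rewrite !klinZ //; [rewrite Hx | apply: pact_linr..].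
Qed.

HB.instance Definition _ := GRing.isSubmodClosed.Build k M core_pred core_closed.

Inductive core_t : predArgType := CoreT (u : M) & u \in core_pred.
Definition core_val (x : core_t) := let: CoreT u _ := x in u.
HB.instance Definition _ := [isSub of core_t for core_val].
HB.instance Definition _ := [Choice of core_t by <:].
HB.instance Definition _ := [SubChoice_isSubZmodule of core_t by <:].
HB.instance Definition _ := [SubZmodule_isSubLmodule of core_t by <:].

Lemma core_valE (a : k) (x y : core_t) : core_val (a *: x + y) = a *: core_val x + core_val y.
Proof. by []. Qed.

Lemma core_inP (m : M) : reflect (core_set m) (m \in core_pred).
Proof. exact: asboolP. Qed.

Lemma core_act_in h (x : core_t) : pact h (core_val x) \in core_pred.
Proof.
case: x => m /core_inP Hm /=; apply/core_inP => g g'.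
by rewrite Hm Hm mulrA.
Qed.

Definition core_act h (x : core_t) : core_t := CoreT (core_act_in h x).

Lemma core_act_linr h : klinear (core_act h).
Proof.
move=> a x y; apply: val_inj => /=.
exact: pact_linr.
Qed.

Lemma core_act_linl a g h x : core_act (a *: g + h) x = a *: core_act g x + core_act h x.
Proof. by apply: val_inj => /=; rewrite pact_linl. Qed.

Lemma core_act_one x : core_act 1 x = x.
Proof. by apply: val_inj => /=; rewrite pact_one. Qed.

Lemma core_act_mul g h x : core_act g (core_act h x) = core_act (g * h) x.
Proof. apply: val_inj => /=; case: x => m /core_inP Hm /=; exact: Hm. Qed.

Definition core_hmod : hmod H :=
  @HMod k H core_t core_act core_act_linr core_act_linl core_act_one core_act_mul.

End Core.
Arguments core_pred {k H HH} M.

Section CoreFun.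
Variables (k : fieldType) (H : algType k) (HH : hopf H).

Definition cF (M N : pmod HH) (f : M -> N) (y : core_hmod M) : core_hmod N :=
  insubd (0 : core_t N) (f (core_val y)).

Definition iota (M : pmod HH) (x : core_hmod M) : M := core_val x.

Lemma pmorph_core (M N : pmod HH) (f : M -> N) m :
  pmorph f -> m \in core_pred M -> f m \in core_pred N.
Proof.
move=> [fl fa] /core_inP Hm; apply/core_inP => g h.
by rewrite -!fa Hm.
Qed.

Lemma pmorph_incl_core (X : hmod H) (M : pmod HH) (f : X -> M) x :
  @pmorph k H HH (incl HH X) M f -> f x \in core_pred M.
Proof.
move=> [fl fa]; apply/core_inP => g h.
have fa' : forall h m, f (hact h m) = pact h (f m) by exact: fa.
by rewrite -!fa' hact_mul.
Qed.

Lemma core_part_a :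
  (forall M : pmod HH, is_global_core (@core_set k H HH M)) /\
  (exists (c : pmod HH -> hmod H)
          (cF : forall M N : pmod HH, (M -> N) -> c M -> c N)
          (iota : forall M : pmod HH, c M -> M),
     is_functor_PH cF /\
     (forall M : pmod HH, @pmorph k H HH (incl HH (c M)) M (iota M)) /\
     (forall (M : pmod HH) (x y : c M), iota M x = iota M y -> x = y) /\
     (forall (M : pmod HH) (m : M), core_set m <-> exists x, iota M x = m) /\
     (forall (M N : pmod HH) (f : M -> N), pmorph f ->
        forall x, iota N (cF M N f x) = f (iota M x)) /\
     right_adjoint_of_incl cF).
Proof.
split.
  move=> M; split; [|split].
  - split; [|split].
    + by move=> g h; rewrite !klin0 //; apply: pact_linr.
    + move=> a x y Hx Hy g h.
      by rewrite !(pact_linr _ a) Hx Hy.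
    + move=> h m Hm g g'; by rewrite Hm Hm mulrA.
  - by move=> g h m Hm; apply: Hm.
  - by move=> Q _ HQ m Qm g h; apply: HQ.
exists (@core_hmod k H HH), cF, iota.
split; [split; [|split]|split; [|split; [|split; [|split]]]].
- move=> M N f Hf.
  have Hc : forall z : core_t M, f (core_val z) \in core_pred N.
    by move=> z; apply: (pmorph_core Hf); apply: valP.
  case: (Hf) => fl fa; split.
  + move=> a x y; apply: val_inj; rewrite /cF /= fl !insubdK ?Hc //.
    by rewrite rpredD ?rpredZ ?Hc.
  + move=> h x; apply: val_inj; rewrite /cF /= !insubdK ?Hc // fa //.
    exact: (core_act_in h (CoreT (Hc x))).
- by move=> M x; rewrite /cF valKd.
- move=> M N L f g Hf Hg x; apply: val_inj; rewrite /cF /=.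
  have H1 : f (core_val x) \in core_pred N by apply: (pmorph_core Hf); apply: valP.
  rewrite (insubdK _ H1) insubdK //. by apply: (pmorph_core Hg).
- move=> M; split.
  + by move=> a x y.
  + by move=> h x.
- by move=> M x y; apply: val_inj.
- move=> M m; split.
  + by move=> Hm; exists (CoreT (introT (core_inP m) Hm)).
  + by move=> [x <-]; apply/core_inP; apply: valP.
- move=> M N f Hf x; rewrite /iota /cF insubdK //.
  by apply: (pmorph_core Hf); apply: valP.
exists (fun X M f x => insubd (0 : core_t M) (f x)).
exists (fun X M g x => core_val (g x)).
split; [|split; [|split; [|split; [|split]]]].
- move=> X M f Hf; split.
  + move=> a x y; apply: val_inj; rewrite /= !insubdK ?(pmorph_incl_core _ Hf) //.
    by case: Hf => fl _; rewrite fl.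
  + move=> h x; apply: val_inj; rewrite /= !insubdK ?(pmorph_incl_core _ Hf) //.
    by case: Hf => _ fa; apply: fa.
- move=> X M g [gl ga]; split.
  + by move=> a x y; rewrite gl.
  + by move=> h x /=; rewrite ga.
- by move=> X M f Hf x /=; rewrite insubdK //; apply: pmorph_incl_core.
- by move=> X M g Hg x /=; rewrite valKd.
- by [].
- move=> X M N f v Hf Hv x; rewrite /cF /= insubdK //.
  by apply: pmorph_incl_core.
Qed.
End CoreFun.

Section PsubLemmas.
Variables (k : fieldType) (H : algType k) (HH : hopf H) (M : pmod HH) (P : M -> Prop).
Hypothesis HP : psubmod P.
Lemma ps0 : P 0. Proof. by case: HP. Qed.
Lemma psD x y : P x -> P y -> P (x + y).
Proof. by case: HP => _ [L _] Px Py; have := L 1 x y Px Py; rewrite scale1r. Qed.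
Lemma psZ a x : P x -> P (a *: x).
Proof. by case: HP => _ [L _] Px; have := L a x 0 Px ps0; rewrite addr0. Qed.
Lemma psN x : P x -> P (- x).
Proof. by move=> Px; rewrite -scaleN1r; apply: psZ. Qed.
Lemma psB x y : P x -> P y -> P (x - y).
Proof. by move=> Px Py; apply: psD => //; apply: psN. Qed.
Lemma psA h x : P x -> P (pact h x).
Proof. by case: HP => _ [_ A]; apply: A. Qed.
End PsubLemmas.

Section Shadow.
Variables (k : fieldType) (H : algType k) (HH : hopf H) (M : pmod HH).

Definition NN : M -> Prop := gen_psubmod (@shadow_gen k H HH M).

Lemma NN_psub : psubmod NN.
Proof.
split; [|split].
- by move=> P HP _; apply: ps0.
- by move=> a x y Nx Ny P HP G; case: (HP) => _ [L _]; apply: L; [apply: Nx|apply: Ny].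
- by move=> h m Nm P HP G; case: (HP) => _ [_ A]; apply: A; apply: Nm.
Qed.

Lemma NN_gen x : shadow_gen x -> NN x.
Proof. by move=> Gx P _ G; apply: G. Qed.

Definition srel : rel M := fun x y => `[< NN (x - y) >].
Lemma srel_refl : reflexive srel.
Proof. by move=> x; apply/asboolP; rewrite subrr; apply: ps0 NN_psub. Qed.
Lemma srel_sym : symmetric srel.
Proof.
move=> x y; apply/asboolP/asboolP => E; rewrite -opprB; exact: psN NN_psub _ E.
Qed.
Lemma srel_trans : transitive srel.
Proof.
move=> y x z /asboolP E1 /asboolP E2; apply/asboolP.
have -> : x - z = (x - y) + (y - z) by rewrite addrA subrK.
exact: psD NN_psub _ _ E1 E2.
Qed.

Definition seqrel := EquivRel srel srel_refl srel_sym srel_trans.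
Definition shadow_q := {eq_quot seqrel}.
HB.instance Definition _ := Choice.copy shadow_q {eq_quot seqrel}.
HB.instance Definition _ := Quotient.copy shadow_q {eq_quot seqrel}.

Lemma piP (x y : M) : \pi_shadow_q x = \pi_shadow_q y <-> NN (x - y).
Proof.
split.
- by move/eqmodP => /asboolP.
- by move=> E; apply/eqmodP; apply/asboolP.
Qed.

Local Notation pi := (\pi_shadow_q).

Lemma reprN (x : M) : NN (repr (pi x) - x).
Proof. by apply/piP; rewrite reprK. Qed.

Definition szero : shadow_q := pi 0.
Definition sadd (x y : shadow_q) : shadow_q := pi (repr x + repr y).
Definition sopp (x : shadow_q) : shadow_q := pi (- repr x).
Definition sscale (a : k) (x : shadow_q) : shadow_q := pi (a *: repr x).

Lemma saddE x y : sadd (pi x) (pi y) = pi (x + y).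
Proof.
apply/piP.
have -> : repr (pi x) + repr (pi y) - (x + y) = (repr (pi x) - x) + (repr (pi y) - y).
  by rewrite opprD addrACA.
by apply: psD NN_psub _ _ (reprN x) (reprN y).
Qed.
Lemma soppE x : sopp (pi x) = pi (- x).
Proof. by apply/piP; rewrite -opprD; apply: psN NN_psub _ (reprN x). Qed.
Lemma sscaleE a x : sscale a (pi x) = pi (a *: x).
Proof. by apply/piP; rewrite -scalerBr; apply: psZ NN_psub _ _ (reprN x). Qed.

Lemma saddA : associative sadd.
Proof. by move=> x y z; elim/quotW: x => x; elim/quotW: y => y; elim/quotW: z => z; rewrite (saddE y z) (saddE x y) !saddE addrA. Qed.
Lemma saddC : commutative sadd.
Proof. by move=> x y; elim/quotW: x => x; elim/quotW: y => y; rewrite !saddE addrC. Qed.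
Lemma sadd0 : left_id szero sadd.
Proof. by move=> x; elim/quotW: x => x; rewrite /szero saddE add0r. Qed.
Lemma saddN : left_inverse szero sopp sadd.
Proof. by move=> x; elim/quotW: x => x; rewrite soppE saddE addNr. Qed.

HB.instance Definition _ := GRing.isZmodule.Build shadow_q saddA saddC sadd0 saddN.

Lemma piD x y : pi (x + y) = pi x + pi y.
Proof. by rewrite -saddE. Qed.

Lemma sscaleA a b v : sscale a (sscale b v) = sscale (a * b) v.
Proof. by elim/quotW: v => x; rewrite (sscaleE b x) !sscaleE scalerA. Qed.
Lemma sscale1 : left_id 1 sscale.
Proof. by move=> x; elim/quotW: x => x; rewrite sscaleE scale1r. Qed.
Lemma sscaleDr : right_distributive sscale (@GRing.add shadow_q).
Proof. move=> a x y; elim/quotW: x => x; elim/quotW: y => y; by rewrite -piD !sscaleE -piD scalerDr. Qed.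
Lemma sscaleDl v : {morph sscale^~ v : a b / a + b}.
Proof. by elim/quotW: v => x a b; rewrite !sscaleE -piD scalerDl. Qed.

HB.instance Definition _ := GRing.Zmodule_isLmodule.Build k shadow_q sscaleA sscale1 sscaleDr sscaleDl.

Lemma piZ a x : pi (a *: x) = a *: pi x.
Proof. by rewrite -sscaleE. Qed.
Lemma pi0 : pi 0 = 0.
Proof. by []. Qed.

Lemma piN x : pi (- x) = - pi x.
Proof. by rewrite -scaleN1r piZ scaleN1r. Qed.
Lemma piB x y : pi (x - y) = pi x - pi y.
Proof. by rewrite piD piN. Qed.

Lemma piP0 (x : M) : pi x = 0 <-> NN x.
Proof. by rewrite -pi0 piP subr0. Qed.

Lemma piS (x : shadow_q) : exists m, x = pi m.
Proof. by exists (repr x); rewrite reprK. Qed.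

Definition sact (h : H) (x : shadow_q) : shadow_q := pi (pact h (repr x)).

Lemma sactE h x : sact h (pi x) = pi (pact h x).
Proof.
apply/piP; rewrite -klinB; last exact: pact_linr.
exact: psA NN_psub _ _ (reprN x).
Qed.

Lemma sact_linr h : klinear (sact h).
Proof.
move=> a x y; have [x' ->] := piS x; have [y' ->] := piS y.
by rewrite -piZ -piD !sactE (pact_linr h) piD piZ.
Qed.
Lemma sact_linl a g h x : sact (a *: g + h) x = a *: sact g x + sact h x.
Proof. by elim/quotW: x => x; rewrite !sactE pact_linl piD piZ. Qed.
Lemma sact_one x : sact 1 x = x.
Proof. by elim/quotW: x => x; rewrite sactE pact_one. Qed.
Lemma sact_mul g h x : sact g (sact h x) = sact (g * h) x.
Proof.
elim/quotW: x => x; rewrite (sactE h x) !sactE; apply/piP; apply: NN_gen.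
by exists g, h, x.
Qed.

Definition shadow_hmod : hmod H :=
  @HMod k H shadow_q sact sact_linr sact_linl sact_one sact_mul.

End Shadow.
Arguments NN {k H HH} M.

Section ShadowFun.
Variables (k : fieldType) (H : algType k) (HH : hopf H).

Lemma shE (M : pmod HH) h (x : shadow_q M) : @hact k H (shadow_hmod M) h x = sact h x.
Proof. by []. Qed.

Lemma quotmap (M : pmod HH) :
  @quotient_map k H HH M (incl HH (shadow_hmod M)) (\pi_(shadow_q M)) (NN M).
Proof.
split; [split|split].
- by move=> a x y; rewrite piD piZ.
- by move=> h m /=; rewrite sactE.
- by move=> y; exists (repr y); exact: reprK.
- by move=> m; exact: piP0.
Qed.

Lemma pmorph_NN (M N : pmod HH) (f : M -> N) x :
  pmorph f -> NN M x -> NN N (f x).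
Proof.
move=> [fl fa] Nx; apply: (Nx (fun x => NN N (f x))).
- split; [|split].
  + by rewrite (klin0 fl); apply: ps0 (NN_psub N).
  + move=> a y z Ny Nz; rewrite fl; apply: psD (NN_psub N) _ _ _ Nz.
    exact: psZ (NN_psub N) _ _ Ny.
  + by move=> h m Nm; rewrite fa; apply: psA (NN_psub N) _ _ Nm.
- move=> y [h [g [m ->]]]; apply: NN_gen; exists h, g, (f m).
  by rewrite (klinB fl) !fa.
Qed.

Definition sF (M N : pmod HH) (f : M -> N) (y : shadow_hmod M) : shadow_hmod N :=
  \pi_(shadow_q N) (f (repr (y : shadow_q M))).

Lemma sFE (M N : pmod HH) (f : M -> N) m : pmorph f ->
  sF f (\pi_(shadow_q M) m) = \pi_(shadow_q N) (f m).
Proof.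
move=> Hf; apply/piP; case: (Hf) => fl _; rewrite -(klinB fl).
exact: pmorph_NN Hf (reprN m).
Qed.

Lemma incl_kill (M : pmod HH) (X : hmod H) (f : M -> X) m :
  @pmorph k H HH M (incl HH X) f -> NN M m -> f m = 0.
Proof.
move=> [fl fa] Nm; apply: (Nm (fun x => f x = 0)).
- split; [|split].
  + exact: klin0 fl.
  + by move=> a y z Ey Ez; rewrite fl Ey Ez scaler0 addr0.
  + by move=> h y Ey; rewrite fa Ey /=; apply: klin0; apply: hact_linr.
- move=> y [h [g [m' ->]]]; rewrite (klinB fl) !fa /=.
  by rewrite hact_mul subrr.
Qed.

Lemma incl_reprE (M : pmod HH) (X : hmod H) (f : M -> X) m :
  @pmorph k H HH M (incl HH X) f -> f (repr (\pi_(shadow_q M) m)) = f m.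
Proof.
move=> Hf; apply/eqP; rewrite -subr_eq0; apply/eqP.
case: (Hf) => fl _; rewrite -(klinB fl); apply: incl_kill Hf _.
exact: reprN.
Qed.

Lemma shadow_part_b :
  (forall M : pmod HH, is_global_shadow (gen_psubmod (@shadow_gen k H HH M))) /\
  (exists (s : pmod HH -> hmod H)
          (sF : forall M N : pmod HH, (M -> N) -> s M -> s N)
          (q : forall M : pmod HH, M -> s M),
     is_functor_PH sF /\
     (forall M : pmod HH, @quotient_map k H HH M (incl HH (s M)) (q M)
                  (gen_psubmod (@shadow_gen k H HH M))) /\
     (forall (M N : pmod HH) (f : M -> N), pmorph f ->
        forall m, sF M N f (q M m) = q N (f m)) /\
     left_adjoint_of_incl sF).
Proof.
split.
  move=> M; split; [exact: NN_psub|split].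
  - exists (incl HH (shadow_hmod M)), (\pi_(shadow_q M)); split; first exact: quotmap.
    by move=> g h m; exact: (hact_mul g h m).
  - move=> P' HP' [Q [q [[[ql qa] [qs qk]] gQ]]] m Nm.
    apply: Nm => // y [h [g [m' ->]]]; apply/qk.
    by rewrite (klinB ql) !qa gQ subrr.
exists (@shadow_hmod k H HH), sF, (fun M => \pi_(shadow_q M)).
split; [split; [|split]|split; [|split]].
- move=> M N f Hf; split.
  + move=> a x y; have [x' ->] := piS x; have [y' ->] := piS y.
    case: (Hf) => fl _.
    by rewrite -piZ -piD !sFE // fl piD piZ.
  + move=> h x; have [x' ->] := piS x.
    case: (Hf) => _ fa.
    by rewrite !shE (sactE h x') !sFE // fa sactE.
- by move=> M x; rewrite /sF reprK.
- move=> M N L f g Hf Hg x; have [x' ->] := piS x.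
  have Hgf : pmorph (g \o f).
    case: Hf Hg => fl fa [gl ga]; split.
    + by move=> a y z; rewrite /= fl gl.
    + by move=> h m; rewrite /= fa ga.
  by rewrite !sFE.
- exact: quotmap.
- by move=> M N f Hf m; rewrite sFE.
exists (fun M X g m => g (\pi_(shadow_q M) m)).
exists (fun M X f y => f (repr (y : shadow_q M))).
split; [|split; [|split; [|split; [|split]]]].
- move=> M X g [gl ga]; split.
  + by move=> a x y; rewrite piD piZ gl.
  + move=> h m /=; rewrite -ga shE sactE //.
- move=> M X f Hf; split.
  + move=> a x y; have [x' ->] := piS x; have [y' ->] := piS y.
    case: (Hf) => fl _.
    by rewrite -piZ -piD !incl_reprE // fl.
  + move=> h x; have [x' ->] := piS x.
    case: (Hf) => _ fa.
    by rewrite shE sactE !incl_reprE // fa.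
- by move=> M X g Hg y; rewrite reprK.
- by move=> M X f Hf m; rewrite incl_reprE.
- by move=> M N X u g Hu Hg m /=; rewrite sFE.
- by [].
Qed.
End ShadowFun.

Theorem mainTheorem4 (k : fieldType) (H : algType k) (HH : hopf H) :
  (* (a) the global core *)
  (forall M : pmod HH, is_global_core (@core_set k H HH M)) /\
  (exists (c : pmod HH -> hmod H)
          (cF : forall M N : pmod HH, (M -> N) -> c M -> c N)
          (iota : forall M : pmod HH, c M -> M),
     is_functor_PH cF /\
     (* c M is the global core of M, embedded in M by iota M ... *)
     (forall M : pmod HH, @pmorph k H HH (incl HH (c M)) M (iota M)) /\
     (forall (M : pmod HH) (x y : c M), iota M x = iota M y -> x = y) /\
     (forall (M : pmod HH) (m : M), core_set m <-> exists x, iota M x = m) /\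
     (* ... and c f is the restriction of f *)
     (forall (M N : pmod HH) (f : M -> N), pmorph f ->
        forall x, iota N (cF M N f x) = f (iota M x)) /\
     right_adjoint_of_incl cF) /\
  (* (b) the global shadow *)
  (forall M : pmod HH, is_global_shadow (gen_psubmod (@shadow_gen k H HH M))) /\
  (exists (s : pmod HH -> hmod H)
          (sF : forall M N : pmod HH, (M -> N) -> s M -> s N)
          (q : forall M : pmod HH, M -> s M),
     is_functor_PH sF /\
     (* s M = M / N, with quotient map q M ... *)
     (forall M : pmod HH, @quotient_map k H HH M (incl HH (s M)) (q M)
                  (gen_psubmod (@shadow_gen k H HH M))) /\
     (* ... and s f is the map induced by f on the quotients *)
     (forall (M N : pmod HH) (f : M -> N), pmorph f ->
        forall m, sF M N f (q M m) = q N (f m)) /\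
     left_adjoint_of_incl sF).
Proof.
have [A1 A2] := @core_part_a k H HH.
have [B1 B2] := @shadow_part_b k H HH.
by split; [|split; [|split]].
Qed.
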